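(* Let $f\in\mathcal{C}$ and $f^\ast(t):=tf(1/t)$, $t>0$, with $f^\ast(0):=\lim_{t\downarrow0}f^\ast(t)$. For all probability measures $P,Q$: (1) for $w\in(0,\frac12]$, $$D_f(P\|Q)\ge f^\ast\!\Bigl(1+\frac{\mathcal{I}_w(P\|Q)}{1-w}\Bigr)+f^\ast\!\Bigl(\frac{w-\mathcal{I}_w(P\|Q)}{1-w}\Bigr)-f^\ast\!\Bigl(\frac{w}{1-w}\Bigr);$$ (2) for $w\in(\frac12,1)$, $$D_f(P\|Q)\ge f^\ast\!\Bigl(1+\frac{\mathcal{I}_w(Q\|P)}{w}\Bigr)+f^\ast\!\Bigl(\frac{1-w-\mathcal{I}_w(Q\|P)}{w}\Bigr)-f^\ast\!\Bigl(\frac{1-w}{w}\Bigr).$$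
   Context: $\mathcal{C}$ is the set of convex $f\colon(0,\infty)\to\mathbb{R}$ with $f(1)=0$. For densities $p,q$ w.r.t. a dominating measure $\mu$, $D_f(P\|Q):=\int qf(p/q)\,\mathrm{d}\mu$ with conventions $f(0):=\lim_{t\downarrow0}f(t)$, $0f(0/0)=0$, $0f(a/0)=a\lim_{u\to\infty}f(u)/u$. DeGroot statistical information: $\mathcal{I}_\omega(P\|Q):=D_{\phi_\omega}(P\|Q)$ with $\phi_\omega(t)=\min\{\omega,1-\omega\}-\min\{\omega t,1-\omega\}$, $\omega\in(0,1)$. *)

(* Defs.v *)
From HB Require Import structures.
From mathcomp Require Import all_boot all_order all_algebra.
From mathcomp Require Import all_classical all_reals all_analysis.
Set Implicit Arguments. Unset Strict Implicit. Unset Printing Implicit Defensive.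
Import Order.TTheory GRing.Theory Num.Theory.
Import numFieldNormedType.Exports.
Local Open Scope classical_set_scope.
Local Open Scope ring_scope.

Section Defs.
Variable R : realType.

Definition convex_pos (f : R -> R) : Prop :=
  forall x y t : R, 0 < x -> 0 < y -> 0 <= t <= 1 ->
    f (t * x + (1 - t) * y) <= t * f x + (1 - t) * f y.

Definition in_C (f : R -> R) : Prop := convex_pos f /\ f 1 = 0.

Definition f_at0 (f : R -> R) : \bar R := lim ((f t)%:E @[t --> 0^'+]).

Definition f_slope_inf (f : R -> R) : \bar R :=
  lim ((f u / u)%:E @[u --> +oo]).

Definition fdiv_integrand (f : R -> R) (T : Type) (p q : T -> R) (x : T)
  : \bar R :=
  if 0 < q x then
    (if 0 < p x then (q x * f (p x / q x))%:E else ((q x)%:E * f_at0 f)%E)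
  else
    (if 0 < p x then ((p x)%:E * f_slope_inf f)%E else 0%E).

(* D_f(P||Q) computed from densities p, q w.r.t. mu *)
Definition fdiv (f : R -> R) d (T : measurableType d)
  (mu : {measure set T -> \bar R}) (p q : T -> R) : \bar R :=
  (\int[mu]_x fdiv_integrand f p q x)%E.

Definition phi (w : R) (t : R) : R :=
  Num.min w (1 - w) - Num.min (w * t) (1 - w).

Definition degroot d (T : measurableType d)
  (mu : {measure set T -> \bar R}) (p q : T -> R) (w : R) : \bar R :=
  fdiv (phi w) mu p q.

Definition fstar (f : R -> R) (t : R) : \bar R :=
  if 0 < t then (t * f (1 / t))%:E
  else lim ((s * f (1 / s))%:E @[s --> 0^'+]).

End Defs.

(* Main.v *)
Require Import Defs.
From HB Require Import structures.
From mathcomp Require Import all_boot all_order all_algebra.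
From mathcomp Require Import all_classical all_reals all_analysis.
From mathcomp Require Import lra ring.
Import Order.TTheory GRing.Theory Num.Theory.
Import numFieldNormedType.Exports.
Local Open Scope classical_set_scope.
Local Open Scope ring_scope.
Set Implicit Arguments. Unset Strict Implicit.

Section Real.
Variable R : realType.
Implicit Types f g : R -> R.

Lemma chord f : convex_pos f -> forall x y z : R, 0 < x -> x < y -> y < z ->
  (z - x) * f y <= (z - y) * f x + (y - x) * f z.
Proof.
move=> cf x y z x0 xy yz.
have zx : 0 < z - x by lra.
have zx0 : z - x != 0 by rewrite gt_eqF.
set t := (z - y) / (z - x).
have ht : 0 <= t <= 1.
  apply/andP; split; first by rewrite divr_ge0 //; lra.
  by rewrite ler_pdivrMr //; lra.
have := cf x z t x0 (lt_trans x0 (lt_trans xy yz)) ht.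
have -> : t * x + (1 - t) * z = y by rewrite /t; field.
move=> H.
have e1 : (z - x) * t = z - y by rewrite /t; field.
have e2 : (z - x) * (1 - t) = y - x by rewrite mulrBr mulr1 e1; ring.
clearbody t.
have := ler_wpM2l (ltW zx) H.
by rewrite mulrDr !mulrA e1 e2.
Qed.

Definition persp f (t : R) := t * f (1 / t).

Lemma persp_convex f : convex_pos f -> convex_pos (persp f).
Proof.
move=> cf x y t x0 y0 /andP[t0 t1].
rewrite /persp.
set s := t * x + (1 - t) * y.
have s0 : 0 < s by rewrite /s; nra.
have sn : s != 0 by rewrite gt_eqF.
have xn : x != 0 by rewrite gt_eqF.
have yn : y != 0 by rewrite gt_eqF.
set l := t * x / s.
have hl : 0 <= l <= 1.
  apply/andP; split; first by apply: divr_ge0; [nra|exact: ltW].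
  rewrite ler_pdivrMr // mul1r /s; nra.
have := cf (1 / x) (1 / y) l (divr_gt0 ltr01 x0) (divr_gt0 ltr01 y0) hl.
have -> : l * (1 / x) + (1 - l) * (1 / y) = 1 / s.
  rewrite /l /s; field; rewrite -/s; apply/and3P; split => //.
move=> H.
have e1 : s * l = t * x by rewrite /l; field.
have e2 : s * (1 - l) = (1 - t) * y by rewrite mulrBr mulr1 e1 /s; ring.
clearbody l.
have := ler_wpM2l (ltW s0) H.
by rewrite mulrDr !mulrA e1 e2.
Qed.


Lemma div_le (a b c d : R) : 0 < b -> 0 < d -> a * d <= c * b -> a / b <= c / d.
Proof. by move=> b0 d0 H; rewrite ler_pdivrMr // mulrAC ler_pdivlMr. Qed.

Lemma subgrad h : convex_pos h -> forall x0 : R, 0 < x0 ->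
  exists s, forall y, 0 < y -> h x0 + s * (y - x0) <= h y.
Proof.
move=> ch x0 x00.
pose S := [set (h x0 - h x) / (x0 - x) | x in [set x | 0 < x < x0]].
have key : forall x y, 0 < x < x0 -> x0 < y ->
    (h x0 - h x) / (x0 - x) <= (h y - h x0) / (y - x0).
  move=> x y /andP[x0' xx0] x0y.
  have := @chord h ch _ _ _ x0' xx0 x0y.
  move=> H; apply: div_le; [lra|lra|nra].
have S0 : S !=set0.
  exists ((h x0 - h (x0 / 2)) / (x0 - x0 / 2)); exists (x0 / 2) => //.
  rewrite /=; apply/andP; split; lra.
have Sub : ubound S ((h (x0 + 1) - h x0) / (x0 + 1 - x0)).
  move=> _ [x hx <-]; apply: key => //; lra.
exists (sup S) => y y0.
have [yx|xy] := ltP y x0.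
  have : (h x0 - h y) / (x0 - y) <= sup S.
    have hs : has_ubound S by exists ((h (x0 + 1) - h x0) / (x0 + 1 - x0)).
    by apply: (ub_le_sup hs); exists y => //=; apply/andP.
  rewrite ler_pdivrMr; last lra.
  by move=> H; rewrite mulrBr in H; lra.
have [->|xy'] := eqVneq y x0; first by rewrite subrr mulr0 addr0.
have xy2 : x0 < y by rewrite lt_neqAle eq_sym xy' xy.
have : sup S <= (h y - h x0) / (y - x0).
  apply: ge_sup => // _ [x hx <-]; exact: key.
rewrite ler_pdivlMr; last lra.
move=> H; nra.
Qed.


Lemma cvg_affine (c K : R) : (c + K * t)%:E @[t --> 0^'+] --> c%:E.
Proof.
apply/fine_cvgP; split; first by near=> t.
have -> : (fine \o (fun t => (c + K * t)%:E)) = (fun t => c + K * t) by [].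
apply: cvg_at_right_filter.
have H : (c + K * t) @[t --> (0:R)] --> c + K * 0.
  by apply: cvgD; [exact: cvg_cst| apply: cvgM; [exact: cvg_cst| exact: cvg_id]].
by rewrite mulr0 addr0 in H.
Unshelve. all: by end_near. Qed.


Lemma slope_le h : convex_pos h -> forall x y z : R, 0 < x -> x < y -> y < z ->
  (h y - h x) / (y - x) <= (h z - h y) / (z - y).
Proof.
move=> ch x y z x0 xy yz; have := @chord h ch _ _ _ x0 xy yz.
move=> H; apply: div_le; [lra|lra|nra].
Qed.

Lemma cvg0_convex h : convex_pos h -> cvg ((h t)%:E @[t --> (0:R)^'+]).
Proof.
move=> ch.
have [sg sgE] : exists sg, sg = (h 1 - h (1/2)) / (1 - 1/2) by eexists.
have mono : forall x y, 0 < x -> x <= y -> y < 1/2 -> h y - sg * y <= h x - sg * x.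
  move=> x y x0 xy y2.
  have [->|xy'] := eqVneq x y; first by [].
  have xy2 : x < y by rewrite lt_neqAle xy' xy.
  have s1 := @slope_le h ch _ _ _ x0 xy2 y2.
  have s2 := @slope_le h ch y (1/2) 1 (lt_trans x0 xy2) y2 ltac:(lra).
  have := le_trans s1 s2; rewrite -sgE ler_pdivrMr; last lra.
  by move=> H; rewrite mulrBr in H; lra.
have cu : cvg ((h t - sg * t)%:E @[t --> 0^'+]).
  apply: nonincreasing_at_right_is_cvge.
  near=> b => x y; rewrite !in_itv /= => /andP[x0 xb] /andP[y0 yb] xy.
  rewrite lee_fin; apply: mono => //.
  apply: (lt_trans yb); near: b; apply: nbhs_right_lt; lra.
have cs : (sg * t)%:E @[t --> 0^'+] --> 0%:E.
  have := @cvg_affine 0 sg; under eq_fun do rewrite add0r; exact.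
have := cvgeD (@fin_num_adde_defl _ _ 0%:E isT) cu cs.
under eq_fun do rewrite -EFinD subrK.
by move=> H; apply/cvg_ex; eexists; apply: H.
Unshelve. all: by end_near. Qed.


Lemma inv_pinfty : (fun u : R => u^-1) @ +oo --> (0:R)^'+.
Proof.
move=> A /= /nbhs_ballP[e /= e0 He].
suff : \forall u \near +oo, A u^-1 by [].
near=> u.
have u0 : 0 < u by near: u; apply: nbhs_pinfty_gt; rewrite num_real.
have ue : e^-1 < u by near: u; apply: nbhs_pinfty_gt; rewrite num_real.
apply: He; last by rewrite invr_gt0.
rewrite /ball /= sub0r normrN gtr0_norm ?invr_gt0 //.
by rewrite -(invrK e) ltf_pV2 ?posrE ?invr_gt0.
Unshelve. all: by end_near. Qed.


Lemma slope_cvg f : convex_pos f ->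
  (f u / u)%:E @[u --> +oo] --> lim ((persp f t)%:E @[t --> (0:R)^'+]).
Proof.
move=> cf.
have cg := cvg0_convex (persp_convex cf).
have H : (persp f u^-1)%:E @[u --> +oo] -->
   lim ((persp f t)%:E @[t --> (0:R)^'+]).
  exact: (cvg_comp _ _ inv_pinfty cg).
apply: cvg_trans H; apply: near_eq_cvg; near=> u.
have u0 : 0 < u by near: u; apply: nbhs_pinfty_gt; rewrite num_real.
rewrite /persp /= div1r invrK mulrC //.
Unshelve. all: by end_near. Qed.

Lemma lim_ge_affine h (c K : R) : cvg ((h t)%:E @[t --> (0:R)^'+]) ->
  (\forall t \near (0:R)^'+, c + K * t <= h t) ->
  (c%:E <= lim ((h t)%:E @[t --> (0:R)^'+]))%E.
Proof.
move=> ch hn.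
rewrite -(cvg_lim _ (@cvg_affine c K)) //.
apply: lee_lim.
- by apply/cvg_ex; eexists; exact: cvg_affine.
- exact: ch.
- by near=> t; rewrite lee_fin; near: t.
Unshelve. all: by end_near. Qed.

Lemma event_gt h (M : R) : cvg ((h t)%:E @[t --> (0:R)^'+]) ->
  (M%:E < lim ((h t)%:E @[t --> (0:R)^'+]))%E ->
  exists2 e : R, 0 < e & forall r, 0 < r -> r < e -> M < h r.
Proof.
move=> ch Ml.
have := ch _ (open_ereal_gt' Ml).
move=> /= /nbhs_ballP[e /= e0 He].
exists e => // r r0 re.
have := He r; rewrite lte_fin; apply => //.
by rewrite /ball /= sub0r normrN gtr0_norm.
Qed.


Lemma low_at0 g (M : R) : convex_pos g -> cvg ((g t)%:E @[t --> (0:R)^'+]) ->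
  (M%:E < lim ((g t)%:E @[t --> (0:R)^'+]))%E ->
  exists s1, forall r, 0 < r -> M + s1 * r <= g r.
Proof.
move=> cg cv Ml.
have [e e0 He] := event_gt cv Ml.
pose d := e / 2.
have d0 : 0 < d by rewrite /d; lra.
have de : d < e by rewrite /d; lra.
have [sg sgE] : exists sg, sg = (g d - g (d / 2)) / (d - d / 2) by eexists.
exists (Num.min sg 0) => r r0.
have s1s : Num.min sg 0 <= sg by rewrite ge_min lexx.
have s10 : Num.min sg 0 <= 0 by rewrite ge_min lexx orbT.
move: (Num.min sg 0) s1s s10 => s1 s1s s10.
have [rd|dr] := leP r d.
  have := He r r0 (le_lt_trans rd de); nra.
have := @slope_le g cg (d / 2) d r ltac:(lra) ltac:(lra) dr.
rewrite -sgE ler_pdivlMr; last lra.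
have Md := He d d0 de.
nra.
Qed.


Lemma ptreal f (k m M s1 s2 : R) : 0 < k ->
  (forall r, 0 < r -> M + s1 * (r - m) <= persp f r) ->
  (forall y, 0 < y -> persp f (1 + k - m) + s2 * (y - (1 + k - m)) <= persp f y) ->
  forall a b, 0 < a -> 0 < b ->
  (M - s1 * m + persp f (1 + k - m) - persp f k - s2 * (1 - m)) * a
    + s1 * Num.min b (k * a) + s2 * (b - Num.min b (k * a)) <= b * f (a / b).
Proof.
move=> k0 H1 H2 a b a0 b0.
have [r rE] : exists r, r = b / a by eexists.
have r0 : 0 < r by rewrite rE divr_gt0.
have gr : M + s1 * (Num.min r k - m) + persp f (1 + k - m) - persp f k
    + s2 * ((r - Num.min r k) - (1 - m)) <= persp f r.
  have [rk|kr] := leP r k.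
    have h1 := H1 r r0; have h2 := H2 k k0.
    nra.
  have h1 := H1 k k0; have h2 := H2 r r0.
  nra.
have e1 : Num.min b (k * a) = a * Num.min r k.
  rewrite minr_pMr ?(ltW a0) // rE mulrC; congr Num.min; field.
  by rewrite gt_eqF.
have e2 : b * f (a / b) = a * persp f r.
  rewrite /persp rE div1r invf_div; field.
  by rewrite gt_eqF.
have e3 : b = a * r by rewrite rE; field; rewrite gt_eqF.
rewrite e2 e1 e3.
set G := persp f r; move: gr; rewrite -/G => gr.
have := ler_wpM2l (ltW a0) gr.
move=> H; apply: le_trans H; rewrite le_eqVlt; apply/orP; left; apply/eqP; ring.
Qed.


Lemma ereal_approx (a D : \bar R) (c : R) :
  (forall M : R, (M%:E < a)%E -> ((M + c)%:E <= D)%E) -> (a + c%:E <= D)%E.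
Proof.
move=> H; case: a H => [r| |] H; last by rewrite leNye.
- case: D H => [dd| |] H; last 2 first.
  + by rewrite leey.
  + by have := H (r - 1) ltac:(rewrite lte_fin; lra).
  rewrite -EFinD lee_fin.
  rewrite leNgt; apply/negP => hlt.
  have := H (r - (r + c - dd) / 2); rewrite lte_fin lee_fin.
  by move=> /(_ ltac:(lra)) h; exfalso; lra.
- case: D H => [dd| |] H.
  + by move: (H (dd - c + 1) (ltry _)); rewrite lee_fin => h; exfalso; lra.
  + by [].
  + by have := H 0 (ltry _).
Qed.

End Real.

Section Meas.
Local Open Scope ereal_scope.
Variables (R : realType) (d : measure_display) (T : measurableType d)
  (mu : {measure set T -> \bar R}).

Lemma int_mono (F G : T -> \bar R) : (forall x, F x <= G x) ->
  \int[mu]_x F x <= \int[mu]_x G x.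
Proof.
move=> FG; rewrite (integralE _ _ F) (integralE _ _ G).
apply: leeB.
  rewrite !ge0_integralE //.
  apply: ereal_sup_le => _ [h hle <-]; exists h => //= x.
  apply: le_trans (hle x) _; rewrite !patch_setT.
  by apply: (@funepos_le _ _ setT) => [y _|]; [exact: FG| by rewrite in_setT].
rewrite !ge0_integralE //.
apply: ereal_sup_le => _ [h hle <-]; exists h => //= x.
apply: le_trans (hle x) _; rewrite !patch_setT.
by apply: (@funeneg_le _ _ setT) => [y _|]; [exact: FG| by rewrite in_setT].
Qed.

Lemma integrable_of (h : T -> R) : measurable_fun setT h -> (forall x, (0 <= h x)%R) ->
  \int[mu]_x (h x)%:E = 1 -> mu.-integrable setT (EFin \o h).
Proof.
move=> mh h0 h1; apply/integrableP; split; first exact/measurable_realfun.measurable_EFinP.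
rewrite (eq_integral (fun x => (h x)%:E)); first by rewrite h1 ltry.
by move=> x _ /=; rewrite ger0_norm.
Qed.

Lemma integrable_le (h l : T -> R) : measurable_fun setT h ->
  (forall x, (0 <= h x <= l x)%R) -> mu.-integrable setT (EFin \o l) ->
  mu.-integrable setT (EFin \o h).
Proof.
move=> mh hl il; apply: le_integrable il => //; first exact/measurable_realfun.measurable_EFinP.
move=> x _ /=; have /andP[h0 hl'] := hl x.
by rewrite !ger0_norm ?lee_fin // (le_trans h0).
Qed.

Lemma int_lin (a1 a2 a3 v1 v2 v3 : R) (h1 h2 h3 : T -> R) :
  mu.-integrable setT (EFin \o h1) -> mu.-integrable setT (EFin \o h2) ->
  mu.-integrable setT (EFin \o h3) ->
  \int[mu]_x (h1 x)%:E = v1%:E -> \int[mu]_x (h2 x)%:E = v2%:E ->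
  \int[mu]_x (h3 x)%:E = v3%:E ->
  \int[mu]_x (a1 * h1 x + a2 * h2 x + a3 * h3 x)%:E =
    (a1 * v1 + a2 * v2 + a3 * v3)%:E.
Proof.
move=> i1 i2 i3 e1 e2 e3.
under eq_integral do rewrite !EFinD !EFinM.
have j1 : mu.-integrable setT (fun x => a1%:E * (h1 x)%:E) by exact: integrableZl.
have j2 : mu.-integrable setT (fun x => a2%:E * (h2 x)%:E) by exact: integrableZl.
have j3 : mu.-integrable setT (fun x => a3%:E * (h3 x)%:E) by exact: integrableZl.
rewrite integralD //; last exact: integrableD.
rewrite integralD // !integralZl // e1 e2 e3.
by rewrite -!EFinM -!EFinD.
Qed.

End Meas.

Section Main.
Variables (R : realType) (d : measure_display) (T : measurableType d)
  (mu : {measure set T -> \bar R}).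

Lemma main_bound (f : R -> R) (k : R) (p q : T -> R) :
  in_C f -> 0 < k -> measurable_fun setT p -> measurable_fun setT q ->
  (forall x, 0 <= p x) -> (forall x, 0 <= q x) ->
  (\int[mu]_x (p x)%:E = 1)%E -> (\int[mu]_x (q x)%:E = 1)%E ->
  (fstar f (fine (\int[mu]_x (Num.min (q x) (k * p x))%:E)) +
   (persp f (1 + k - fine (\int[mu]_x (Num.min (q x) (k * p x))%:E))
     - persp f k)%:E <= fdiv f mu p q)%E.
Proof.
move=> [cf f1] k0 mp mq p0 q0 ip1 iq1.
pose mn := fun x => Num.min (q x) (k * p x).
have mmn : measurable_fun setT mn.
  apply: measurable_realfun.measurable_minr => //.
  by apply: measurable_realfun.measurable_funM => //; exact: measurable_cst.
have mn0 : forall x, 0 <= mn x <= q x.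
  move=> x; rewrite /mn ge_min lexx orTb andbT le_min q0 /=.
  by rewrite mulr_ge0 // ltW.
have ip := integrable_of mp p0 ip1.
have iq := integrable_of mq q0 iq1.
have imn := integrable_le mmn mn0 iq.
have mu0 : (0 <= \int[mu]_x (mn x)%:E)%E.
  by apply: integral_ge0 => x _; rewrite lee_fin; have /andP[] := mn0 x.
have mu1 : (\int[mu]_x (mn x)%:E <= 1)%E.
  rewrite -iq1; apply: int_mono => x; rewrite lee_fin.
  by have /andP[] := mn0 x.
have muE : (\int[mu]_x (mn x)%:E = (fine (\int[mu]_x (mn x)%:E))%:E)%E.
  by rewrite fineK // ge0_fin_numE // (le_lt_trans mu1) // ltry.
rewrite -/mn.
move: muE mu0 mu1; set m := fine _ => muE mu0 mu1.
have m0 : 0 <= m by rewrite -lee_fin -muE.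
have m1 : m <= 1 by rewrite -lee_fin -muE.
set g := persp f.
have cg := persp_convex cf.
have n0 : 0 < 1 + k - m by lra.
have [s2 H2] := subgrad cg n0.
have cvf := cvg0_convex cf.
have cvgg := cvg0_convex cg.
have slopeE : f_slope_inf f = lim ((g t)%:E @[t --> (0:R)^'+]).
  exact: (cvg_lim _ (slope_cvg cf)).
have core : forall M s1, (forall r, 0 < r -> M + s1 * (r - m) <= g r) ->
    ((M + (g (1 + k - m) - g k))%:E <= fdiv f mu p q)%E.
  move=> M s1 H1.
  set C := M - s1 * m + g (1 + k - m) - g k - s2 * (1 - m).
  have pt := ptreal k0 H1 H2.
  have HA : (s2%:E <= f_at0 f)%E.
    apply: (@lim_ge_affine _ _ s2 (C + s1 * k - s2 * k) cvf).
    near=> t.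
    have t0 : 0 < t by near: t; exact: nbhs_right_gt.
    have tk : t <= k^-1 by near: t; apply: nbhs_right_le; rewrite invr_gt0.
    have ktl : k * t <= 1 by rewrite -(mulfV (lt0r_neq0 k0)) ler_wpM2l // ltW.
    have := pt t 1 t0 ltr01; rewrite divr1 mul1r.
    have -> : Num.min 1 (k * t) = k * t by apply: min_r.
    move=> H; apply: le_trans H; rewrite le_eqVlt; apply/orP; left; apply/eqP.
    rewrite /C /g; ring.
  have HB : (C%:E <= f_slope_inf f)%E.
    rewrite slopeE; apply: (@lim_ge_affine _ _ C s1 cvgg).
    near=> t.
    have t0 : 0 < t by near: t; exact: nbhs_right_gt.
    have tk : t <= k by near: t; exact: nbhs_right_le.
    have := pt 1 t ltr01 t0; rewrite !mulr1.
    have -> : Num.min t k = t by apply: min_l.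
    by move=> H; apply: le_trans H; rewrite subrr mulr0 addr0.
  have Lle : forall x, ((C * p x + s1 * mn x + s2 * (q x - mn x))%:E
      <= fdiv_integrand f p q x)%E.
    move=> x; rewrite /fdiv_integrand /mn.
    case: ifPn => qx; case: ifPn => px.
    - by rewrite lee_fin; exact: pt.
    - have px0 : p x = 0 by apply/eqP; rewrite eq_le p0 andbT leNgt.
      rewrite px0 !mulr0.
      have -> : Num.min (q x) 0 = 0 by apply: min_r; exact: ltW.
      rewrite mulr0 !add0r subr0 mulrC EFinM.
      by apply: lee_wpmul2l => //; rewrite lee_fin.
    - have qx0 : q x = 0 by apply/eqP; rewrite eq_le q0 andbT leNgt.
      rewrite qx0.
      have -> : Num.min 0 (k * p x) = 0 by apply: min_l; rewrite mulr_ge0 // ltW.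
      rewrite mulr0 subr0 mulr0 !addr0 mulrC EFinM.
      by apply: lee_wpmul2l => //; rewrite lee_fin.
    - have px0 : p x = 0 by apply/eqP; rewrite eq_le p0 andbT leNgt.
      have qx0 : q x = 0 by apply/eqP; rewrite eq_le q0 andbT leNgt.
      by rewrite px0 qx0 !mulr0 minxx ?subr0 ?mulr0 ?addr0.
  rewrite /fdiv; apply: le_trans; last exact: (int_mono mu Lle).
  have -> : (fun x => (C * p x + s1 * mn x + s2 * (q x - mn x))%:E) =
            (fun x => (C * p x + (s1 - s2) * mn x + s2 * q x)%:E).
    by apply/funext => x; congr EFin; ring.
  rewrite (int_lin _ _ _ ip imn iq ip1 muE iq1).
  rewrite lee_fin /C /g le_eqVlt; apply/orP; left; apply/eqP; ring.
apply: ereal_approx => M HM.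
suff [s1 H1] : exists s1, forall r, 0 < r -> M + s1 * (r - m) <= g r.
  exact: core H1.
have [mpos|mle] := ltP 0 m.
  move: HM; rewrite /fstar mpos lte_fin => HM.
  have [s1 Hs] := subgrad cg mpos.
  exists s1 => r r0; have := Hs r r0; rewrite /g /persp; lra.
have m00 : m = 0 by apply/eqP; rewrite eq_le mle m0.
move: HM; rewrite /fstar m00 ltxx => HM.
have [s1 Hs] := low_at0 cg cvgg HM.
by exists s1 => r r0; rewrite subr0; exact: Hs.
Unshelve. all: by end_near. Qed.


End Main.

Section Phi.
Variable R : realType.
Set Implicit Arguments. Unset Strict Implicit.

Lemma phi_at0 (w : R) : 0 < w < 1 -> f_at0 (phi w) = (Num.min w (1 - w))%:E.
Proof.
move=> /andP[w0 w1].
rewrite /f_at0; apply: cvg_lim => //.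
have H := @cvg_affine R (Num.min w (1 - w)) (- w).
apply: cvg_trans H; apply: near_eq_cvg; near=> t.
have t0 : 0 < t by near: t; exact: nbhs_right_gt.
have tw : t < (1 - w) / w by near: t; apply: nbhs_right_lt; rewrite divr_gt0 //; lra.
have wt : w * t <= 1 - w.
  by rewrite mulrC -ler_pdivlMr //; exact: ltW.
rewrite /phi; congr EFin.
have -> : Num.min (w * t) (1 - w) = w * t by apply: min_l.
by rewrite mulNr.
Unshelve. all: by end_near. Qed.

Lemma phi_slope (w : R) : 0 < w < 1 -> f_slope_inf (phi w) = 0%:E.
Proof.
move=> /andP[w0 w1].
rewrite /f_slope_inf; apply: cvg_lim => //.
set c0 := Num.min w (1 - w) - (1 - w).
have H := cvg_comp _ _ (@inv_pinfty R) (@cvg_affine R 0 c0).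
apply: cvg_trans H; apply: near_eq_cvg; near=> u.
have u0 : 0 < u by near: u; apply: nbhs_pinfty_gt; rewrite num_real.
have uw : (1 - w) / w < u by near: u; apply: nbhs_pinfty_gt; rewrite num_real.
have wu : 1 - w <= w * u.
  by rewrite mulrC -ler_pdivrMr //; exact: ltW.
rewrite /phi /=; congr EFin.
have -> : Num.min (w * u) (1 - w) = 1 - w by apply: min_r.
by rewrite add0r /c0 mulrC.
Unshelve. all: by end_near. Qed.

Lemma phi_integrand (w : R) (T : Type) (a b : T -> R) x : 0 < w < 1 ->
  0 <= a x -> 0 <= b x ->
  fdiv_integrand (phi w) a b x =
  (Num.min w (1 - w) * b x - Num.min (w * a x) ((1 - w) * b x))%:E.
Proof.
move=> ww a0 b0; have /andP[w0 w1] := ww.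
rewrite /fdiv_integrand phi_at0 // phi_slope //.
case: ifPn => bx; case: ifPn => ax.
- rewrite /phi; congr EFin.
  rewrite mulrBr; congr (_ - _); first by rewrite mulrC.
  have e : b x * (w * (a x / b x)) = w * a x by field; rewrite gt_eqF.
  by rewrite minr_pMr ?ltW // e [b x * _]mulrC.
- have ax0 : a x = 0 by apply/eqP; rewrite eq_le a0 andbT leNgt.
  rewrite ax0 mulr0.
  have -> : Num.min 0 ((1 - w) * b x) = 0 by apply: min_l; rewrite mulr_ge0 //; lra.
  by rewrite subr0 -EFinM mulrC.
- have bx0 : b x = 0 by apply/eqP; rewrite eq_le b0 andbT leNgt.
  rewrite bx0 !mulr0 mule0.
  have -> : Num.min (w * a x) 0 = 0 by apply: min_r; rewrite mulr_ge0 // ltW.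
  by rewrite subr0.
- have ax0 : a x = 0 by apply/eqP; rewrite eq_le a0 andbT leNgt.
  have bx0 : b x = 0 by apply/eqP; rewrite eq_le b0 andbT leNgt.
  by rewrite ax0 bx0 !mulr0 minxx subr0.
Qed.

Lemma fineMpos (c : R) (X : \bar R) : 0 < c -> fine (c%:E * X)%E = c * fine X.
Proof.
move=> c0; case: X => [x| |] /=.
- by [].
- by rewrite gt0_muley ?lte_fin //= mulr0.
- by rewrite gt0_muleNy ?lte_fin //= mulr0.
Qed.

Lemma fstar_pos (f : R -> R) (t : R) : 0 < t -> fstar f t = (persp f t)%:E.
Proof. by move=> t0; rewrite /fstar t0. Qed.

End Phi.

Section Final.
Variables (R : realType) (d : measure_display) (T : measurableType d)
  (mu : {measure set T -> \bar R}).
Set Implicit Arguments. Unset Strict Implicit.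

Lemma mn_fin (k : R) (a b : T -> R) : 0 < k ->
  measurable_fun setT a -> measurable_fun setT b ->
  (forall x, 0 <= a x) -> (forall x, 0 <= b x) ->
  (\int[mu]_x (b x)%:E = 1)%E ->
  (\int[mu]_x (Num.min (b x) (k * a x))%:E)%E \is a fin_num.
Proof.
move=> k0 ma mb a0 b0 ib1.
have mn0 : forall x, 0 <= Num.min (b x) (k * a x) <= b x.
  move=> x; rewrite ge_min lexx orTb andbT le_min b0 /=.
  by rewrite mulr_ge0 // ltW.
have mu0 : (0 <= \int[mu]_x (Num.min (b x) (k * a x))%:E)%E.
  by apply: integral_ge0 => x _; rewrite lee_fin; have /andP[] := mn0 x.
have mu1 : (\int[mu]_x (Num.min (b x) (k * a x))%:E <= 1)%E.
  rewrite -ib1; apply: int_mono => x; rewrite lee_fin.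
  by have /andP[] := mn0 x.
by rewrite ge0_fin_numE // (le_lt_trans mu1) // ltry.
Qed.

Lemma int_scale (c k : R) (a b : T -> R) : 0 < c -> 0 < k ->
  measurable_fun setT a -> measurable_fun setT b ->
  (forall x, 0 <= a x) -> (forall x, 0 <= b x) ->
  (\int[mu]_x (Num.min (c * b x) ((c * k) * a x))%:E =
   c%:E * \int[mu]_x (Num.min (b x) (k * a x))%:E)%E.
Proof.
move=> c0 k0 ma mb a0 b0.
have -> : (fun x => (Num.min (c * b x) ((c * k) * a x))%:E) =
    (fun x => c%:E * (Num.min (b x) (k * a x))%:E)%E.
  by apply/funext => x; rewrite -mulrA -minr_pMr ?ltW // EFinM.
apply: ge0_integralZl => //.
- apply/measurable_realfun.measurable_EFinP.
  apply: measurable_realfun.measurable_minr => //.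
  by apply: measurable_realfun.measurable_funM => //; exact: measurable_cst.
- move=> x _; rewrite lee_fin le_min b0 /=; by rewrite mulr_ge0 // ltW.
- by rewrite lee_fin ltW.
Qed.


Lemma degroot_val (w : R) (a b : T -> R) : 0 < w < 1 ->
  measurable_fun setT a -> measurable_fun setT b ->
  (forall x, 0 <= a x) -> (forall x, 0 <= b x) ->
  (\int[mu]_x (b x)%:E = 1)%E ->
  degroot mu a b w = ((Num.min w (1 - w))%:E -
     \int[mu]_x (Num.min (w * a x) ((1 - w) * b x))%:E)%E.
Proof.
move=> ww ma mb a0 b0 ib1; have /andP[w0 w1] := ww.
have ib := integrable_of mb b0 ib1.
have mm : measurable_fun setT (fun x => Num.min (w * a x) ((1 - w) * b x)).
  apply: measurable_realfun.measurable_minr => //.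
    by apply: measurable_realfun.measurable_funM => //; exact: measurable_cst.
  by apply: measurable_realfun.measurable_funM => //; exact: measurable_cst.
have im : mu.-integrable setT (EFin \o (fun x => Num.min (w * a x) ((1 - w) * b x))).
  apply: integrable_le mm _ ib => x.
  rewrite le_min !mulr_ge0 //=; [|lra|lra].
  rewrite ge_min; apply/orP; right; rewrite ler_piMl //; lra.
rewrite /degroot /fdiv.
rewrite (eq_integral (fun x => ((Num.min w (1 - w))%:E * (b x)%:E -
    (Num.min (w * a x) ((1 - w) * b x))%:E)%E)); last first.
  by move=> x _; rewrite phi_integrand // EFinB EFinM.
rewrite integralB //; last exact: integrableZl.
by rewrite integralZl // ib1 mule1.
Qed.

End Final.

Theorem corollary4 (R : realType) (d : measure_display) (T : measurableType d)
  (f : R -> R) (P Q : probability T R) (mu : {measure set T -> \bar R})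
  (p q : T -> R) :
  in_C f ->
  measurable_fun setT p -> measurable_fun setT q ->
  (forall x, 0 <= p x) -> (forall x, 0 <= q x) ->
  (forall A, measurable A -> P A = (\int[mu]_(x in A) (p x)%:E)%E) ->
  (forall A, measurable A -> Q A = (\int[mu]_(x in A) (q x)%:E)%E) ->
  (forall w : R, 0 < w <= 1 / 2 ->
     let I := fine (degroot mu p q w) in
     (fstar f (1 + I / (1 - w)) + fstar f ((w - I) / (1 - w))
        - fstar f (w / (1 - w)) <= fdiv f mu p q)%E) /\
  (forall w : R, 1 / 2 < w < 1 ->
     let I := fine (degroot mu q p w) in
     (fstar f (1 + I / w) + fstar f ((1 - w - I) / w)
        - fstar f ((1 - w) / w) <= fdiv f mu p q)%E).
Proof.
move=> hC mp mq p0 q0 HP HQ.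
have ip1 : (\int[mu]_x (p x)%:E = 1)%E by rewrite -HP // probability_setT.
have iq1 : (\int[mu]_x (q x)%:E = 1)%E by rewrite -HQ // probability_setT.
split.
- move=> w /andP[w0 wh]; rewrite [X in is_true X]/=.
  set I := fine (degroot mu p q w).
  have w1 : w < 1 by lra.
  have ww : 0 < w < 1 by apply/andP.
  have k0 : 0 < w / (1 - w) by rewrite divr_gt0 //; lra.
  move: k0; set k := w / (1 - w) => k0.
  have fin := mn_fin (mu:=mu) k0 mp mq p0 q0 iq1.
  move: fin; set X := (\int[mu]_x (Num.min (q x) (k * p x))%:E)%E => fin.
  have sc : (\int[mu]_x (Num.min (w * p x) ((1 - w) * q x))%:E = (1 - w)%:E * X)%E.
    rewrite -(int_scale mu _ k0 mp mq p0 q0); last lra.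
    apply: eq_integral => x _; congr EFin.
    have -> : (1 - w) * k = w by rewrite /k; field; rewrite subr_eq0 gt_eqF.
    by rewrite minC.
  have Iv : I = w - (1 - w) * fine X.
    rewrite /I degroot_val // sc.
    have -> : Num.min w (1 - w) = w by apply: min_l; lra.
    by rewrite -(fineK fin) -EFinM -EFinB.
  rewrite Iv.
  set m := fine X.
  have e1 : 1 + (w - (1 - w) * m) / (1 - w) = 1 + k - m.
    by rewrite /k; field; rewrite subr_eq0 gt_eqF.
  have e2 : (w - (w - (1 - w) * m)) / (1 - w) = m.
    by field; rewrite subr_eq0 gt_eqF.
  have m1 : m <= 1.
    rewrite /m -lee_fin (fineK fin) -iq1; apply: int_mono => x.
    by rewrite lee_fin ge_min lexx.
  have n0 : 0 < 1 + k - m by lra.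
  rewrite e1 e2 -/k (fstar_pos _ n0) (fstar_pos _ k0).
  have := main_bound (mu:=mu) hC k0 mp mq p0 q0 ip1 iq1; rewrite -/X -/m.
  by rewrite [((persp f _)%:E + _)%E]addeC -addeA -EFinB.
- move=> w /andP[wh w1]; rewrite [X in is_true X]/=.
  set I := fine (degroot mu q p w).
  have w0 : 0 < w by lra.
  have ww : 0 < w < 1 by apply/andP.
  have k0 : 0 < (1 - w) / w by rewrite divr_gt0 //; lra.
  move: k0; set k := (1 - w) / w => k0.
  have fin := mn_fin (mu:=mu) k0 mp mq p0 q0 iq1.
  move: fin; set X := (\int[mu]_x (Num.min (q x) (k * p x))%:E)%E => fin.
  have sc : (\int[mu]_x (Num.min (w * q x) ((1 - w) * p x))%:E = w%:E * X)%E.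
    rewrite -(int_scale mu _ k0 mp mq p0 q0) //.
    apply: eq_integral => x _; congr EFin.
    by have -> : w * k = 1 - w by rewrite /k; field; rewrite gt_eqF.
  have Iv : I = (1 - w) - w * fine X.
    rewrite /I degroot_val // sc.
    have -> : Num.min w (1 - w) = 1 - w by apply: min_r; lra.
    by rewrite -(fineK fin) -EFinM -EFinB.
  rewrite Iv.
  set m := fine X.
  have e1 : 1 + (1 - w - w * m) / w = 1 + k - m.
    by rewrite /k; field; rewrite gt_eqF.
  have e2 : (1 - w - (1 - w - w * m)) / w = m.
    by field; rewrite gt_eqF.
  have m1 : m <= 1.
    rewrite /m -lee_fin (fineK fin) -iq1; apply: int_mono => x.
    by rewrite lee_fin ge_min lexx.
  have n0 : 0 < 1 + k - m by lra.
  rewrite e1 e2 -/k (fstar_pos _ n0) (fstar_pos _ k0).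
  have := main_bound (mu:=mu) hC k0 mp mq p0 q0 ip1 iq1; rewrite -/X -/m.
  by rewrite [((persp f _)%:E + _)%E]addeC -addeA -EFinB.
Qed.
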